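(* Let $P$ be a polyhedral map, let $B^u_P$ be the barycentric subdivision $B_P$ with the vertex colours removed, and let $S_i(B_P)$ be the set of automorphisms of $B^u_P$ that map every vertex of (former) colour 0 to a vertex of colour 2 and every vertex of colour 2 to a vertex of colour 0, and map vertices of colour 1 to vertices of colour 1. Then the elements of the group $\mathrm{Aut}(B^u_P)$ are exactly the permutations in $\mathrm{Aut}(B_P)\cup S_i(B_P)$, where $\mathrm{Aut}(B_P)$ is the group of colour-preserving automorphisms of $B_P$.
   Context: A polyhedral map is a 3-connected graph embedded in a closed orientable surface such that every face is an open disc and the closures of any two faces have connected intersection. The barycentric subdivision $B_P$ of $P$ is obtained by adding a vertex inside every face and on every edge and joining each face-vertex to all vertices and edge-vertices on that face's boundary, so that all faces are triangles; original vertices get colour 0, edge-vertices colour 1, face-vertices colour 2. Automorphisms of $B_P$ as a coloured map preserve colours. *)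

(* Defs.v *)
(* Maps on closed surfaces encoded combinatorially by
   flag systems (F, r_0, r_1, r_2). *)
From mathcomp Require Import all_boot.
From mathcomp Require Import perm.
Set Implicit Arguments. Unset Strict Implicit. Unset Printing Implicit Defensive.

Definition c0 : 'I_3 := @Ordinal 3 0 erefl.
Definition c1 : 'I_3 := @Ordinal 3 1 erefl.
Definition c2 : 'I_3 := @Ordinal 3 2 erefl.

Section FlagSystem.
Variables (F : finType) (r : 'I_3 -> F -> F).

Definition orbrel (i : 'I_3) : rel F :=
  fun a b => [exists j : 'I_3, (j != i) && (b == r j a)].

(* the i-element (vertex for i=0, edge for i=1, face for i=2) containing
   flag x, represented as the set of its flags *)
Definition orb (i : 'I_3) (x : F) : {set F} := [set y | connect (orbrel i) x y].

Definition orientable_map : Prop :=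
  [/\ (forall i x, r i (r i x) = x) /\ (forall i x, r i x != x),
      (forall x, r c0 (r c2 x) = r c2 (r c0 x)),
      (forall x, r c0 (r c2 x) != x),
      (forall x y, connect (fun a b => [exists j : 'I_3, b == r j a]) x y)
    & (exists s : F -> bool, forall i x, s (r i x) = ~~ s x)].

(* underlying graph: vertices = 0-orbits; edge orb c1 x joins orb c0 x and orb c0 (r c0 x) *)
Definition gvertices : {set {set F}} := [set orb c0 x | x in F].
Definition gadj : rel {set F} :=
  fun u w => [exists x, (orb c0 x == u) && (orb c0 (r c0 x) == w)].

Definition adj_avoid (S : {set {set F}}) : rel {set F} :=
  fun u w => [&& gadj u w, u \notin S & w \notin S].

(* simple 3-connected graph *)
Definition three_connected : Prop :=
  [/\ (forall x, orb c0 x != orb c0 (r c0 x)),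
      (forall x y, orb c0 x = orb c0 y -> orb c0 (r c0 x) = orb c0 (r c0 y) ->
                  orb c1 x = orb c1 y),
      4 <= #|gvertices|
    & (forall (a b u w : {set F}), u \in gvertices -> w \in gvertices ->
        u \notin [set a; b] -> w \notin [set a; b] ->
        connect (adj_avoid [set a; b]) u w)].

Definition incident (A B : {set F}) : bool := A :&: B != set0.

(* vertices and edges in the intersection of the closures of faces f and h *)
Definition common_vertices (f h : {set F}) : {set {set F}} :=
  [set v in gvertices | incident v f && incident v h].
Definition common_adj (f h : {set F}) : rel {set F} :=
  fun u w => [exists x, [&& incident (orb c1 x) f, incident (orb c1 x) h,
                           orb c0 x == u & orb c0 (r c0 x) == w]].

Definition faces_meet_connected : Prop :=
  forall x y u w, u \in common_vertices (orb c2 x) (orb c2 y) ->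
    w \in common_vertices (orb c2 x) (orb c2 y) ->
    connect (common_adj (orb c2 x) (orb c2 y)) u w.

Definition polyhedral_map : Prop :=
  [/\ orientable_map, three_connected & faces_meet_connected].

(* barycentric subdivision: vertices are (colour, element) pairs *)
Definition BVpred : pred ('I_3 * {set F}) :=
  fun v => [exists x, v.2 == orb v.1 x].
Definition BV := {v : 'I_3 * {set F} | BVpred v}.

Definition colour (v : BV) : nat := (val v).1.

(* triangle of B_P determined by a flag *)
Definition tri (x : F) : {set 'I_3 * {set F}} := [set (i, orb i x) | i : 'I_3].
Definition is_triangle (T : {set BV}) : bool := [exists x, (val @: T) == tri x].

(* automorphisms of the uncoloured map B^u_P: vertex permutations preserving triangles *)
Definition is_autU (g : {perm BV}) : Prop :=
  forall T : {set BV}, is_triangle (g @: T) = is_triangle T.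

Definition is_autB (g : {perm BV}) : Prop :=
  is_autU g /\ forall v, colour (g v) = colour v.

Definition in_Si (g : {perm BV}) : Prop :=
  [/\ is_autU g,
      (forall v, colour v = 0 -> colour (g v) = 2),
      (forall v, colour v = 2 -> colour (g v) = 0)
    & (forall v, colour v = 1 -> colour (g v) = 1)].

End FlagSystem.

(* Main.v *)
Require Import Defs.
From mathcomp Require Import all_boot perm.
From mathcomp Require Import zify.
Set Implicit Arguments. Unset Strict Implicit. Unset Printing Implicit Defensive.

Section S.
Variables (F : finType) (r : 'I_3 -> F -> F).
Hypothesis rinv : forall i x, r i (r i x) = x.

Lemma orbrel_sym i : symmetric (orbrel r i).
Proof.
move=> a b; apply/existsP/existsP => [] [j /andP[hj /eqP ->]]; exists j;
  by rewrite hj rinv eqxx.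
Qed.

Lemma in_orb i x y : (y \in orb r i x) = connect (orbrel r i) x y.
Proof. by rewrite inE. Qed.

Lemma orb_eq i x y : y \in orb r i x -> orb r i y = orb r i x.
Proof.
rewrite in_orb => hxy; apply/setP => z; rewrite !in_orb.
apply/idP/idP => h; first exact: connect_trans hxy h.
rewrite (sym_connect_sym (orbrel_sym i)) in hxy.
exact: connect_trans hxy h.
Qed.

Lemma orb_step i j x : j != i -> orb r i (r j x) = orb r i x.
Proof.
move=> hj; apply: orb_eq; rewrite in_orb; apply: connect1.
by apply/existsP; exists j; rewrite hj eqxx.
Qed.

Lemma orb_self i x : x \in orb r i x.
Proof. by rewrite in_orb connect0. Qed.
Hypothesis rcomm : forall x, r c0 (r c2 x) = r c2 (r c0 x).

Lemma in4 (T : finType) (x a b c y : T) : y \in [set x; a; b; c] ->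
  [\/ y = x, y = a, y = b | y = c].
Proof.
by rewrite !inE => /orP[/orP[/orP[]|]|] /eqP ->; [constructor 1|constructor 2|constructor 3|constructor 4].
Qed.

Lemma edge_orb x u : u \in orb r c1 x ->
  u \in [set x; r c0 x; r c2 x; r c0 (r c2 x)].
Proof.
rewrite in_orb => h.
have cl : closed (orbrel r c1) [set x; r c0 x; r c2 x; r c0 (r c2 x)].
  have fw : forall a b, orbrel r c1 a b ->
     a \in [set x; r c0 x; r c2 x; r c0 (r c2 x)] ->
     b \in [set x; r c0 x; r c2 x; r c0 (r c2 x)].
    move=> a b /existsP[j /andP[hj /eqP ->]].
    have : j = c0 \/ j = c2.
      case: j hj => [[|[|[|]]] //] ? _; [left|right]; exact: val_inj.
    by case=> ->; move=> /in4[] ->; rewrite !inE;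
      rewrite ?rinv -?rcomm ?rinv ?rcomm ?rinv ?eqxx ?orbT.
  move=> a b hab; apply/idP/idP; first exact: fw.
  apply: fw; by rewrite orbrel_sym.
by rewrite -(closed_connect cl h) !inE eqxx.
Qed.

Lemma edge_orb_other d x u : d != c1 -> u \in orb r c1 x ->
  orb r d u = orb r d x \/ orb r d u = orb r d (r d x).
Proof.
move=> hd /edge_orb /in4[] ->; first by left.
- have : d = c0 \/ d = c2.
    case: d hd => [[|[|[|]]] //] ? _; [left|right]; exact: val_inj.
  case=> ->; [right|left] => //; exact: orb_step.
- have : d = c0 \/ d = c2.
    case: d hd => [[|[|[|]]] //] ? _; [left|right]; exact: val_inj.
  case=> ->; [left|right] => //; exact: orb_step.
- have : d = c0 \/ d = c2.
    case: d hd => [[|[|[|]]] //] ? _; [left|right]; exact: val_inj.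
  case=> ->; right.
    by rewrite rcomm (@orb_step c0 c2).
  by rewrite (@orb_step c2 c0).
Qed.

Lemma bvP i x : BVpred r (i, orb r i x).
Proof. by apply/existsP; exists x. Qed.

Definition bv i x : BV r := exist _ (i, orb r i x) (bvP i x).

Lemma bv_surj (v : BV r) : exists x, v = bv (val v).1 x.
Proof.
case: v => [[i S] hv]; case/existsP: (hv) => x /eqP /= hS.
by exists x; apply: val_inj => /=; rewrite hS.
Qed.

Lemma bv_inj i j x y : bv i x = bv j y -> i = j /\ orb r i x = orb r j y.
Proof. by move/(congr1 val) => [-> ->]. Qed.

Lemma bv_eq i x y : orb r i x = orb r i y -> bv i x = bv i y.
Proof. by move=> h; apply: val_inj => /=; rewrite h. Qed.

Definition Tset x : {set BV r} := [set bv i x | i : 'I_3].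

Lemma Tset_tri x : is_triangle (Tset x).
Proof.
apply/existsP; exists x; rewrite /Tset -imset_comp; apply/eqP.
by apply: eq_imset.
Qed.

Lemma tri_Tset T : is_triangle T -> exists u, T = Tset u.
Proof.
move=> /existsP[u /eqP h]; exists u; apply: (imset_inj val_inj).
rewrite h /Tset -imset_comp; by apply: eq_imset.
Qed.

Lemma in_Tset v x : v \in Tset x -> v = bv (val v).1 x.
Proof. by move=> /imsetP[i _ ->]. Qed.

Lemma bv_in_Tset i x : bv i x \in Tset x.
Proof. exact: imset_f. Qed.

Variable g : {perm BV r}.
Hypothesis hg : is_autU g.

Lemma img_tri x : exists u, g @: Tset x = Tset u.
Proof. by apply: tri_Tset; rewrite hg Tset_tri. Qed.

Lemma img_in x : exists u, forall j, g (bv j x) \in Tset u.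
Proof.
have [u hu] := img_tri x; exists u => j; rewrite -hu; apply: imset_f.
exact: bv_in_Tset.
Qed.

Definition sig x i : nat := colour (g (bv i x)).

Lemma sig_lt x i : sig x i < 3.
Proof. exact: ltn_ord. Qed.

Lemma sig_inj x i j : sig x i = sig x j -> i = j.
Proof.
have [u hu] := img_in x.
move=> h; have hij : (val (g (bv i x))).1 = (val (g (bv j x))).1 by apply: val_inj.
have := in_Tset (hu i); have := in_Tset (hu j); rewrite hij => <- /perm_inj.
by case/bv_inj.
Qed.

Lemma ord3 (i : 'I_3) : [\/ i = c0, i = c1 | i = c2].
Proof.
case: i => [[|[|[|]]] //] h; [constructor 1|constructor 2|constructor 3]; exact: val_inj.
Qed.

Lemma sig_step x j i : sig (r j x) i = sig x i.
Proof.
have gen : forall k, k != j -> sig (r j x) k = sig x k.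
  by move=> k hk; rewrite /sig (bv_eq (@orb_step k j x _)) // eq_sym.
have d01 : c0 <> c1 by []. have d02 : c0 <> c2 by []. have d12 : c1 <> c2 by [].
have ia := sig_inj (x := x); have ib := sig_inj (x := r j x).
have l0 := sig_lt x c0; have l1 := sig_lt x c1; have l2 := sig_lt x c2.
have m0 := sig_lt (r j x) c0; have m1 := sig_lt (r j x) c1; have m2 := sig_lt (r j x) c2.
have a01 : sig x c0 <> sig x c1 by move/ia.
have a02 : sig x c0 <> sig x c2 by move/ia.
have a12 : sig x c1 <> sig x c2 by move/ia.
have b01 : sig (r j x) c0 <> sig (r j x) c1 by move/ib.
have b02 : sig (r j x) c0 <> sig (r j x) c2 by move/ib.
have b12 : sig (r j x) c1 <> sig (r j x) c2 by move/ib.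
case: (ord3 j) => hj; subst j; case: (ord3 i) => ->;
  first [by rewrite gen | (try (have e0 := gen c0 isT); try (have e1 := gen c1 isT);
  try (have e2 := gen c2 isT); lia)].
Qed.

Hypothesis hconn : forall x y, connect (fun a b => [exists j : 'I_3, b == r j a]) x y.

Lemma sig_const x y i : sig x i = sig y i.
Proof.
pose A := [set z | [forall k, sig z k == sig x k]].
have cl : closed (fun a b => [exists j : 'I_3, b == r j a]) A.
  move=> a b /existsP[j /eqP ->]; rewrite !inE.
  by apply: eq_forallb => k; rewrite sig_step.
have := closed_connect cl (hconn x y); rewrite !inE.
have -> : [forall k, sig x k == sig x k] by apply/forallP.
by move/esym/forallP/(_ i)/eqP.
Qed.

Lemma colour_g v z : colour (g v) = sig z (val v).1.
Proof. by have [x {1}->] := bv_surj v; rewrite -/(sig x _) (sig_const x z). Qed.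

Lemma per_k c z y : orb r c y = orb r c z -> sig z c = 1 ->
  exists u, g (bv c z) = bv c1 u /\
   exists e : 'I_3, (e : nat) = sig z c1 /\ g (bv c1 y) = bv e u.
Proof.
move=> hy hs; have [u hu] := img_in y; exists u; split.
  rewrite -(bv_eq hy) (in_Tset (hu c)); congr bv; apply: val_inj => /=.
  by rewrite -/(colour _) -/(sig _ _) (sig_const y z) hs.
exists (val (g (bv c1 y))).1; split; first by rewrite -/(colour _) -/(sig _ _) (sig_const y z).
exact: in_Tset (hu c1).
Qed.

Lemma no_one c z y1 y2 y3 :
  orb r c y1 = orb r c z -> orb r c y2 = orb r c z -> orb r c y3 = orb r c z ->
  orb r c1 y1 != orb r c1 y2 -> orb r c1 y1 != orb r c1 y3 ->
  orb r c1 y2 != orb r c1 y3 -> sig z c = 1 -> False.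
Proof.
move=> h1 h2 h3 n12 n13 n23 hs.
have hc : c != c1.
  apply/eqP => ec; subst c; by rewrite h1 h2 eqxx in n12.
have hd : sig z c1 != 1.
  by apply/eqP => e; move: hc; rewrite (sig_inj (esym (etrans e (esym hs)))) eqxx.
have [u1 [gu1 [e1 [he1 gy1]]]] := per_k h1 hs.
have [u2 [gu2 [e2 [he2 gy2]]]] := per_k h2 hs.
have [u3 [gu3 [e3 [he3 gy3]]]] := per_k h3 hs.
have E2 : e2 = e1 by apply: val_inj; rewrite /= he1 he2.
have E3 : e3 = e1 by apply: val_inj; rewrite /= he1 he3.
subst e2 e3.
have ne1 : e1 != c1 by apply: contra hd => /eqP E; rewrite -he1 E.
have U2 : u2 \in orb r c1 u1.
  by have [_ ->] := bv_inj (etrans (esym gu1) gu2); exact: orb_self.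
have U3 : u3 \in orb r c1 u1.
  by have [_ ->] := bv_inj (etrans (esym gu1) gu3); exact: orb_self.
pose A := orb r e1 u1; pose B := orb r e1 (r e1 u1).
have K : forall yi yj ui uj, orb r c1 yi != orb r c1 yj ->
    g (bv c1 yi) = bv e1 ui -> g (bv c1 yj) = bv e1 uj ->
    orb r e1 ui = orb r e1 uj -> False.
  move=> yi yj ui uj n gi gj eq.
  have : g (bv c1 yi) = g (bv c1 yj) by rewrite gi gj (bv_eq eq).
  by move/perm_inj/bv_inj => [_ e]; rewrite e eqxx in n.
have O1 : orb r e1 u1 = A \/ orb r e1 u1 = B by left.
have O2 := edge_orb_other ne1 U2; have O3 := edge_orb_other ne1 U3.
rewrite -/A -/B in O2 O3.
case: O1 => P1; case: O2 => P2; case: O3 => P3.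
- by apply: (K _ _ _ _ n12 gy1 gy2); rewrite P1 P2.
- by apply: (K _ _ _ _ n12 gy1 gy2); rewrite P1 P2.
- by apply: (K _ _ _ _ n13 gy1 gy3); rewrite P1 P3.
- by apply: (K _ _ _ _ n23 gy2 gy3); rewrite P2 P3.
- by apply: (K _ _ _ _ n23 gy2 gy3); rewrite P2 P3.
- by apply: (K _ _ _ _ n13 gy1 gy3); rewrite P1 P3.
- by apply: (K _ _ _ _ n12 gy1 gy2); rewrite P1 P2.
- by apply: (K _ _ _ _ n12 gy1 gy2); rewrite P1 P2.
Qed.

Hypothesis rfree : forall i x, r i x != x.
Hypothesis noloop : forall x, orb r c0 x != orb r c0 (r c0 x).
Hypothesis simple : forall x y, orb r c0 x = orb r c0 y ->
  orb r c0 (r c0 x) = orb r c0 (r c0 y) -> orb r c1 x = orb r c1 y.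
Hypothesis card4 : 4 <= #|gvertices r|.
Hypothesis conn3 : forall (a b u w : {set F}), u \in gvertices r -> w \in gvertices r ->
        u \notin [set a; b] -> w \notin [set a; b] ->
        connect (adj_avoid r [set a; b]) u w.

Lemma nb_edge y y' : orb r c0 y = orb r c0 y' ->
  orb r c0 (r c0 y) != orb r c0 (r c0 y') -> orb r c1 y != orb r c1 y'.
Proof.
move=> e0 n; apply/eqP => e1.
have : r c0 y' \in orb r c1 y by rewrite e1 -(@orb_step c1 c0) //; exact: orb_self.
case/(edge_orb_other (d := c0) isT) => h.
  by move: (noloop y'); rewrite h e0 eqxx.
by rewrite h eqxx in n.
Qed.

Lemma few_nb z a b : orb r c0 z != a -> orb r c0 z != b ->
  (forall y, orb r c0 y = orb r c0 z -> orb r c0 (r c0 y) = a \/ orb r c0 (r c0 y) = b) ->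
  False.
Proof.
move=> na nb hall; set u := orb r c0 z.
have uV : u \in gvertices r by apply: imset_f.
have : ~~ (gvertices r \subset [set a; b; u]).
  apply/negP => sub.
  have h3 : #|[set a; b; u]| <= 3 by rewrite !cardsU !cards1; lia.
  by have := leq_trans (leq_trans card4 (subset_leq_card sub)) h3.
case/subsetPn => w wV wn.
have uab : u \notin [set a; b] by rewrite !inE negb_or na nb.
have wab : w \notin [set a; b] by move: wn; rewrite !inE !negb_or => /andP[/andP[-> ->] _].
have wu : w != u by move: wn; rewrite !inE !negb_or => /andP[_ ->].
case/connectP: (conn3 uV wV uab wab) => [[|u' p]] /=.
  by move=> _ /eqP; rewrite (negbTE wu).
case/andP => /and3P[/existsP[x /andP[/eqP hx /eqP hx']] _ u'n] _ _.
by case: (hall x hx) => e; move: u'n; rewrite -hx' e !inE eqxx ?orbT.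
Qed.

Lemma vert3 z : exists y1 y2 y3,
  [/\ orb r c0 y1 = orb r c0 z, orb r c0 y2 = orb r c0 z & orb r c0 y3 = orb r c0 z] /\
  [/\ orb r c1 y1 != orb r c1 y2, orb r c1 y1 != orb r c1 y3 &
      orb r c1 y2 != orb r c1 y3].
Proof.
set a := orb r c0 (r c0 z).
case: (pickP [pred y | (orb r c0 y == orb r c0 z) && (orb r c0 (r c0 y) != a)]) => [y1 /andP[/eqP h1 n1]|none1]; last first.
  exfalso; apply: (few_nb (a := a) (b := a) (noloop z) (noloop z)) => y hy; left.
  by move: (none1 y) => /=; rewrite hy eqxx /= => /negbFE /eqP.
set b := orb r c0 (r c0 y1).
case: (pickP [pred y | [&& (orb r c0 y == orb r c0 z), (orb r c0 (r c0 y) != a) & (orb r c0 (r c0 y) != b)]]) => [y2 /and3P[/eqP h2 n2 m2]|none2]; last first.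
  exfalso; apply: (few_nb (a := a) (b := b) (noloop z)).
    by rewrite -h1 noloop.
  move=> y hy; move: (none2 y) => /=; rewrite hy eqxx /=.
  by case: eqP => [->|_] /=; [left|move/negbFE/eqP; right].
exists z, y1, y2; split; first by [].
split.
- by apply: nb_edge; [rewrite h1 | rewrite eq_sym].
- by apply: nb_edge; [rewrite h2 | rewrite eq_sym].
- by apply: nb_edge; [rewrite h1 h2 | rewrite eq_sym].
Qed.

Lemma deg1_orb x u : r c1 x = r c2 x -> u \in orb r c0 x -> u \in [set x; r c1 x].
Proof.
move=> e; rewrite in_orb => h.
have fw : forall a b, orbrel r c0 a b -> a \in [set x; r c1 x] -> b \in [set x; r c1 x].
  move=> a b /existsP[j /andP[hj /eqP ->]].
  have : j = c1 \/ j = c2.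
    case: j hj => [[|[|[|]]] //] ? _; [left|right]; exact: val_inj.
  by case=> ->; rewrite !inE => /orP[] /eqP ->; rewrite ?rinv ?e ?rinv -?e ?eqxx ?orbT.
have cl : closed (orbrel r c0) [set x; r c1 x].
  move=> a b hab; apply/idP/idP; first exact: fw.
  by apply: fw; rewrite orbrel_sym.
by rewrite -(closed_connect cl h) !inE eqxx.
Qed.

Lemma adj_edges x : orb r c1 x != orb r c1 (r c1 x).
Proof.
apply/eqP => E.
have : r c1 x \in orb r c1 x by rewrite E; exact: orb_self.
have o1 : orb r c0 (r c1 x) = orb r c0 x by rewrite (@orb_step c0 c1).
move/edge_orb/in4 => [] h.
- by move: (rfree c1 x); rewrite h eqxx.
- by move: (noloop x); rewrite -h o1 eqxx.
- have [y1 [y2 [y3 [[h1 h2 h3] [n12 n13 n23]]]]] := vert3 x.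
  have ed : forall y, orb r c0 y = orb r c0 x -> orb r c1 y = orb r c1 x.
    move=> y hy; have : y \in orb r c0 x by rewrite -hy; exact: orb_self.
    move/(deg1_orb h); rewrite !inE => /orP[] /eqP -> //.
  by move: n12; rewrite (ed _ h1) (ed _ h2) eqxx.
- move: (noloop x); rewrite -o1 h rcomm (@orb_step c0 c2) //.
  by rewrite eqxx.
Qed.

Lemma face3 y : exists y1 y2 y3,
  [/\ orb r c2 y1 = orb r c2 y, orb r c2 y2 = orb r c2 y & orb r c2 y3 = orb r c2 y] /\
  [/\ orb r c1 y1 != orb r c1 y2, orb r c1 y1 != orb r c1 y3 &
      orb r c1 y2 != orb r c1 y3].
Proof.
exists y, (r c1 y), (r c1 (r c0 (r c1 y))).
split.
  by split; rewrite ?(@orb_step c2 c1) // ?(@orb_step c2 c0) // ?(@orb_step c2 c1).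
split; first exact: adj_edges.
- apply/eqP => E.
  have : r c1 (r c0 (r c1 y)) \in orb r c1 y by rewrite E; exact: orb_self.
  case/(edge_orb_other (d := c0) isT); rewrite (@orb_step c0 c1) // => h.
    by move: (noloop (r c1 y)); rewrite h (@orb_step c0 c1) // eqxx.
  move/eqP: (adj_edges y); apply; apply: simple; first by rewrite (@orb_step c0 c1).
  by rewrite h.
- by rewrite -(@orb_step c1 c0 (r c1 y)) //; exact: adj_edges.
Qed.

Lemma main_dir : is_autB g \/ in_Si g.
Proof.
case: (pickP (fun _ : F => true)) => [x0 _|none]; last first.
  left; split => // v; have [x _] := bv_surj v; by move: (none x).
have cg := colour_g ^~ x0.
have ia := sig_inj (x := x0).
have l0 := sig_lt x0 c0; have l1 := sig_lt x0 c1; have l2 := sig_lt x0 c2.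
have a01 : sig x0 c0 <> sig x0 c1 by move/ia.
have a02 : sig x0 c0 <> sig x0 c2 by move/ia.
have a12 : sig x0 c1 <> sig x0 c2 by move/ia.
have colv : forall v : BV r, [\/ (val v).1 = c0, (val v).1 = c1 | (val v).1 = c2].
  by move=> v; apply: ord3.
case: (eqVneq (sig x0 c1) 1) => s1.
  case: (eqVneq (sig x0 c0) 0) => s0.
    left; split => // v; rewrite cg /colour.
    case: (colv v) => ->; rewrite ?s0 ?s1 //=; lia.
  right; split => // v; rewrite cg /colour; case: (colv v) => -> //=; lia.
exfalso.
have : sig x0 c0 = 1 \/ sig x0 c2 = 1 by lia.
case=> h.
  have [y1 [y2 [y3 [[h1 h2 h3] [n12 n13 n23]]]]] := vert3 x0.
  exact: (no_one h1 h2 h3 n12 n13 n23 h).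
have [y1 [y2 [y3 [[h1 h2 h3] [n12 n13 n23]]]]] := face3 x0.
exact: (no_one h1 h2 h3 n12 n13 n23 h).
Qed.
End S.

Theorem corollary1 (F : finType) (r : 'I_3 -> F -> F)
  (hP : polyhedral_map r) (g : {perm BV r}) :
  is_autU g <-> (is_autB g \/ in_Si g).
Proof.
split; last by case=> [[]|[]].
move=> hg.
case: hP => [[[rinv rfree] rcomm _ hconn _] [noloop simple card4 conn3] _].
exact: (main_dir rinv rcomm hg hconn rfree noloop simple card4 conn3).
Qed.
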